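(* Let $\Omega=\{1,\dots,m\}^{\mathbb{N}}$ with shift $\sigma$, let $\mathcal{M}$ be the set of Borel probabilities on $\Omega$ with the Monge–Kantorovich metric $d_{MK}$, and let $\mathfrak{T}:\mathcal{M}\to\mathcal{M}$ be the push-forward map $\mathfrak{T}(\mu)(E)=\mu(\sigma^{-1}(E))$. Then the set of periodic points of $\mathfrak{T}$ (those $\mu\in\mathcal{M}$ with $\mathfrak{T}^r(\mu)=\mu$ for some $r\ge1$) is dense in $\mathcal{M}$.
   Context: $\Omega$ carries the metric $d_\Omega(\alpha,\beta)=2^{-k}$ with $k=\min\{i:\alpha_i\neq\beta_i\}$ (and $0$ if $\alpha=\beta$); $d_{MK}(\mu,\nu)=\sup\{\int f\,d\mu-\int f\,d\nu : f \text{ 1-Lipschitz}\}$. $\sigma(x_1,x_2,\dots)=(x_2,x_3,\dots)$. *)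

(* Defs.v *)
From HB Require Import structures.
From mathcomp Require Import all_boot all_order all_algebra.
From mathcomp Require Import all_classical all_reals all_analysis.
Set Implicit Arguments. Unset Strict Implicit. Unset Printing Implicit Defensive.
Import Order.TTheory GRing.Theory Num.Theory.
Local Open Scope classical_set_scope.
Local Open Scope ring_scope.

(* Sequence space over the alphabet {1,...,m}, represented by 'I_m
   (written 'I_(m.-1).+1, which has exactly m elements when 0 < m; this
   form gives the carrier a canonical point).  The coordinate x_{i+1} of
   the paper is (x i) here (0-based indexing). *)
Definition Omega0 (m : nat) := nat -> 'I_(m.-1).+1.
HB.instance Definition _ (m : nat) := gen_eqMixin (Omega0 m).
HB.instance Definition _ (m : nat) := gen_choiceMixin (Omega0 m).
HB.instance Definition _ (m : nat) := isPointed.Build (Omega0 m) (fun _ => ord0).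

(* The metric d_Omega(a,b) = 2^{-k}, k = min{i : a_i <> b_i} (1-based),
   i.e. 2^{-(k0+1)} with k0 the 0-based first index of difference. *)
Definition dOmega (R : realType) (m : nat) (a b : Omega0 m) : R :=
  match pselect (exists i, a i != b i) with
  | left H => (2^-1) ^+ (ex_minn H).+1
  | right _ => 0
  end.

Definition dOpen (R : realType) (m : nat) : set (set (Omega0 m)) :=
  [set A | forall a, A a -> exists2 e : R, 0 < e &
             forall b, @dOmega R m a b < e -> A b].

Definition Omega (R : realType) (m : nat) := g_sigma_algebraType (@dOpen R m).

Definition shift (R : realType) (m : nat) (x : Omega R m) : Omega R m :=
  fun i => x i.+1.

Definition frakT (R : realType) (m : nat) (mu : set (Omega R m) -> \bar R) :
  set (Omega R m) -> \bar R := fun E => mu (@shift R m @^-1` E).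

Definition periodic_point (R : realType) (m : nat)
    (mu : probability (Omega R m) R) : Prop :=
  exists2 r : nat, (1 <= r)%N &
    forall E : set (Omega R m), measurable E ->
      iter r (@frakT R m) (mu : set _ -> _) E = mu E.

Definition lip1 (R : realType) (m : nat) (f : Omega R m -> R) : Prop :=
  forall a b, `|f a - f b| <= @dOmega R m a b.

Definition dMK (R : realType) (m : nat) (mu nu : probability (Omega R m) R)
  : \bar R :=
  ereal_sup [set (\int[mu]_x (f x)%:E - \int[nu]_x (f x)%:E)%E
            | f in [set f | @lip1 R m f]].

(* Main.v *)
Require Import Defs.
From HB Require Import structures.
From mathcomp Require Import all_boot all_order all_algebra.
From mathcomp Require Import all_classical all_reals all_analysis.
From mathcomp Require Import measurable_realfun. 
From mathcomp Require Import lra.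
Import Order.TTheory GRing.Theory Num.Theory.
Local Open Scope classical_set_scope.
Local Open Scope ring_scope.

Section Aux.
Variables (R : realType) (m : nat).

Lemma half_ge0 : (0 : R) <= 2^-1. Proof. by rewrite invr_ge0. Qed.
Lemma half_le1 : (2^-1 : R) <= 1. Proof. by rewrite invf_le1 // ?ler1n // ltr0n. Qed.

Lemma dOmega_ge0 (a b : Omega0 m) : 0 <= @dOmega R m a b.
Proof. rewrite /dOmega; case: pselect => // H; exact: exprn_ge0 half_ge0. Qed.

Lemma dOmega_le1 (a b : Omega0 m) : @dOmega R m a b <= 1.
Proof. rewrite /dOmega; case: pselect => // H; exact: exprn_ile1 half_ge0 half_le1. Qed.

Definition piN (n : nat) (x : Omega R m) : Omega R m := fun i => x (i %% n)%N.

Lemma piN_lip n a b : @dOmega R m (piN n a) (piN n b) <= @dOmega R m a b.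
Proof.
rewrite /dOmega; case: pselect => [H|H]; last first.
  by case: pselect => // H'; exact: exprn_ge0 half_ge0.
case: ex_minnP => k Hk Hmin.
case: pselect => [H'|H']; last first.
  by exfalso; apply: H'; exists (k %% n)%N.
case: ex_minnP => k0 Hk0 Hmin0.
apply: ler_wiXn2l; [exact: half_ge0|exact: half_le1|].
rewrite ltnS; apply: leq_trans (leq_mod k n); exact: Hmin0.
Qed.

Lemma piN_close n x : @dOmega R m x (piN n x) <= (2^-1) ^+ n.+1.
Proof.
rewrite /dOmega; case: pselect => [H|H]; last by exact: exprn_ge0 half_ge0.
case: ex_minnP => k Hk Hmin.
apply: ler_wiXn2l; [exact: half_ge0|exact: half_le1|].
rewrite ltnS leqNgt; apply/negP => kn.
by move: Hk; rewrite /piN modn_small // eqxx.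
Qed.

Lemma piN_meas n : measurable_fun [set: Omega R m] (piN n).
Proof.
apply: (@measurability _ _ _ _ setT (piN n) (@dOpen R m)); first by [].
move=> _ [A oA <-]; rewrite setTI; apply: sub_sigma_algebra => a Aa.
have [e e0 He] := oA _ Aa.
exists e => // b hb; apply: He; exact: le_lt_trans (piN_lip n a b) hb.
Qed.


Lemma lip1_meas (f : Omega R m -> R) : lip1 f -> measurable_fun [set: Omega R m] f.
Proof.
move=> hf; apply: (@measurability _ _ _ _ setT f _ (RGenOInfty.measurableE R)).
move=> _ [_ [x ->] <-]; rewrite setTI; apply: sub_sigma_algebra => a /=.
rewrite in_itv /= andbT => xa.
exists (f a - x); first by rewrite subr_gt0.
move=> b hb; rewrite /= in_itv /= andbT.
have := le_lt_trans (hf a b) hb.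
move=> h; have := ler_norm (f a - f b); move=> h2.
have h3 := le_lt_trans h2 h.
lra.
Qed.

Lemma lip1_int (mu : probability (Omega R m) R) (f : Omega R m -> R) : lip1 f ->
  mu.-integrable [set: Omega R m] (EFin \o f).
Proof.
move=> hf; apply: measurable_bounded_integrable => //.
- by have := @probability_setT _ _ _ mu; rewrite /= => ->; rewrite ltry.

- exact: lip1_meas.
pose x0 : Omega R m := point.
exists (`|f x0| + 1); split; first by rewrite realE; apply/orP; left; rewrite addr_ge0.
move=> M HM x _ /=; apply: le_trans (ltW HM).
have := hf x x0; have := dOmega_le1 x x0 => h1 h2.
have := le_trans h2 h1 => h3.
have := ler_normD (f x - f x0) (f x0); rewrite subrK => h4.
by apply: le_trans h4 _; rewrite addrC lerD2l.
Qed.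

Lemma iter_shift k (y : Omega R m) : iter k (@Defs.shift R m) y = (fun i => y (i + k)%N).
Proof.
elim: k => [|k IH] /=; first by apply: funext => i; rewrite addn0.
by rewrite IH; apply: funext => i; rewrite /Defs.shift addSnnS.
Qed.

Lemma iter_frakT k (g : set (Omega R m) -> \bar R) E :
  iter k (@frakT R m) g E = g ((iter k (@Defs.shift R m)) @^-1` E).
Proof.
elim: k E => [|k IH] E //=.
by rewrite /frakT IH.
Qed.

End Aux.
Arguments piN {R m}.
Arguments piN_lip {R m}.
Arguments piN_close {R m}.
Arguments piN_meas {R m}.
Arguments lip1_meas {R m}.
Arguments lip1_int {R m}.
Arguments iter_shift {R m}.
Arguments iter_frakT {R m}.

HB.instance Definition _ (R : realType) (m n : nat) :=
  isMeasurableFun.Build _ _ _ _ (@piN R m n) (@piN_meas R m n).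

Lemma lip1_comp (R : realType) (m n : nat) (f : Omega R m -> R) :
  lip1 f -> lip1 (f \o @piN R m n).
Proof. move=> hf a b /=. have h1 := hf (piN n a) (piN n b). have h2 := piN_lip n a b. exact: le_trans h1 h2. Qed.

Lemma small_pow (R : realType) (eps : R) : 0 < eps ->
  exists n : nat, (2^-1 : R) ^+ n.+2 < eps.
Proof.
move=> he; exists (Num.truncn eps^-1).
set n := Num.truncn eps^-1.
have h1 := truncnS_gt (eps^-1).
have h2 : (n.+1%:R : R) <= 2 ^+ n.+2.
  rewrite -natrX ler_nat; apply: leq_trans (ltnW (ltn_expl _ _)) => //.
have h3 : eps^-1 < 2 ^+ n.+2 := lt_le_trans h1 h2.
rewrite exprVn -[eps]invrK ltf_pV2 ?posrE ?invr_gt0 ?exprn_gt0 //.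
Qed.

Theorem lemma2p11 (R : realType) (m : nat) (hm : (0 < m)%N)
    (mu : probability (Omega R m) R) (eps : R) (heps : 0 < eps) :
  exists nu : probability (Omega R m) R,
    periodic_point nu /\ (dMK mu nu < eps%:E)%E.
Proof.
have [n hn] := @small_pow R eps heps.
set N := n.+1.
have hp : forall x, iter N (@Defs.shift R m) (piN N x) = piN N x.
  by move=> x; rewrite iter_shift; apply: funext => i; rewrite /piN modnDr.
exists (distribution mu (@piN R m N)); split.
  exists N => // E mE; rewrite iter_frakT /= /distribution /pushforward.
  by congr (mu _); apply: funext => x; rewrite /preimage /=; move: (hp x) => /= ->.
have hlt : (((2^-1 : R)^+N.+1)%:E < eps%:E)%E by rewrite lte_fin.
rewrite /dMK; apply: le_lt_trans hlt.
apply: ge_ereal_sup => _ [f hf <-].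
rewrite (integral_distribution (X := @piN R m N)); last first.
  - exact: (lip1_int mu _ (@lip1_comp R m N f hf)).
  - by apply: measurableT_comp => //; exact: lip1_meas.
rewrite -integralB //; last 2 first.
  - exact: (lip1_int mu f hf).
  - exact: (lip1_int mu _ (@lip1_comp R m N f hf)).
apply: le_trans (@le_integral _ _ _ mu _ measurableT _ (cst ((2^-1)^+N.+1)%:E) _ _ _) _.
- apply: integrableB => //; [exact: (lip1_int mu f hf)|exact: (lip1_int mu _ (@lip1_comp R m N f hf))].
- apply: (lip1_int mu (fun _ => (2^-1 : R)^+N.+1)) => a b; rewrite subrr normr0; exact: dOmega_ge0.
- move=> x _ /=; rewrite -EFinB lee_fin.
  apply: le_trans (ler_norm _) _; apply: le_trans (hf _ _) _; exact: piN_close.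
- by rewrite integral_cst //= probability_setT mule1.
Qed.
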